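(* (1) $\varepsilon^{cop}=\varepsilon$; (2) $S(A)\subseteq A$, $S^{cop}(A)\subseteq A$ and $S^{cop}=S^{-1}$.
   Context: Let $(A,\Delta)$ be a generalized multiplier Hopf coquasigroup: $A$ an associative algebra over a field $k$ with non-degenerate product, $\Delta:A\to M(A\otimes A)$ an algebra homomorphism (not necessarily coassociative) with Galois maps $T_{1}(a\otimes b)=\Delta(a)(1\otimes b)$, $T_{2}(a\otimes b)=(a\otimes 1)\Delta(b)$ in $A\otimes A$, $\varepsilon:A\to k$ linear with $(\varepsilon\otimes\iota)T_{1}(a\otimes b)=ab=(\iota\otimes\varepsilon)T_{2}(a\otimes b)$, $T_{1},T_{2}$ bijective, $T_{1}^{-1}=(\iota\otimes\varepsilon\otimes\iota)(\iota\otimes T_{1}^{-1})(\Delta\otimes\iota)$ and $T_{2}^{-1}=(\iota\otimes\varepsilon\otimes\iota)(T_{2}^{-1}\otimes\iota)(\iota\otimes\Delta)$; its antipode $S:A\to M(A)$ is defined by $S(a)b=(\varepsilon\otimes\iota)T_{1}^{-1}(a\otimes b)$. Assume $(A,\Delta)$ is regular, i.e. $(A,\Delta^{cop})$ (with $\Delta^{cop}$ the flipped comultiplication) is again a generalized multiplier Hopf coquasigroup, and let $\varepsilon^{cop}$ and $S^{cop}$ be its associated counit and antipode. *)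

(* Defs.v *)
(* A is a possibly non-unital algebra: a k-vector space with a bilinear
   associative multiplication mulA.  Tensor products are given by their
   universal property (any model is isomorphic to any other). *)
From HB Require Import structures.
From mathcomp Require Import all_boot all_algebra.
From Stdlib Require Import ClassicalEpsilon.
Set Implicit Arguments. Unset Strict Implicit. Unset Printing Implicit Defensive.
Import GRing.Theory.
Local Open Scope ring_scope.

Definition lin {k : fieldType} {U V : lmodType k} (f : U -> V) : Prop :=
  forall (a : k) x y, f (a *: x + y) = a *: f x + f y.

Definition bilin {k : fieldType} {U V W : lmodType k} (f : U -> V -> W) : Prop :=
  (forall v, lin (fun u => f u v)) /\ (forall u, lin (f u)).

Record tensor_product (k : fieldType) (U V : lmodType k) := TensorProduct {
  tp_space :> lmodType k;
  tp : U -> V -> tp_space;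
  tp_bilin : bilin tp;
  tp_universal : forall (W : lmodType k) (f : U -> V -> W), bilin f ->
    exists! g : tp_space -> W, lin g /\ forall u v, g (tp u v) = f u v }.

Definition tlift {k : fieldType} {U V : lmodType k} (T : tensor_product U V)
  {W : lmodType k} (f : U -> V -> W) : T -> W :=
  epsilon (inhabits (fun _ => 0))
    (fun g : T -> W => lin g /\ forall u v, g (tp T u v) = f u v).
Arguments tlift {k U V} T {W} f _.
Arguments tp {k U V} t _ _.

Section Ops.
Variables (k : fieldType) (A : lmodType k) (mulA : A -> A -> A)
  (A2 : tensor_product A A) (A3 : tensor_product A A2).
Local Notation t2 := (tp A2).
Local Notation t3 := (tp A3).

Definition mul2 (x y : A2) : A2 :=
  tlift A2 (fun a b => tlift A2 (fun c d => t2 (mulA a c) (mulA b d)) y) x.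
(* (c (x) 1) y *)
Definition lmulL (c : A) (y : A2) : A2 := tlift A2 (fun u v => t2 (mulA c u) v) y.
(* x (c (x) 1) *)
Definition rmulL (x : A2) (c : A) : A2 := tlift A2 (fun u v => t2 (mulA u c) v) x.
(* (1 (x) c) y *)
Definition lmulR (c : A) (y : A2) : A2 := tlift A2 (fun u v => t2 u (mulA c v)) y.
(* x (1 (x) c) *)
Definition rmulR (x : A2) (c : A) : A2 := tlift A2 (fun u v => t2 u (mulA v c)) x.
Definition eps_id (eps : A -> k) (x : A2) : A := tlift A2 (fun u v => eps u *: v) x.
Definition id_eps (eps : A -> k) (x : A2) : A := tlift A2 (fun u v => eps v *: u) x.
Definition flip2 (x : A2) : A2 := tlift A2 (fun u v => t2 v u) x.
Definition tens_r (x : A2) (c : A) : A3 := tlift A2 (fun u v => t3 u (t2 v c)) x.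
Definition id_eps_id (eps : A -> k) (z : A3) : A2 :=
  tlift A3 (fun u y => t2 u (eps_id eps y)) z.
Definition id_tens (F : A2 -> A2) (z : A3) : A3 := tlift A3 (fun u y => t3 u (F y)) z.
Definition tens_id (F : A2 -> A2) (z : A3) : A3 :=
  tlift A3 (fun u y => tlift A2 (fun v c => tens_r (F (t2 u v)) c) y) z.

Definition nd_algebra : Prop :=
  bilin mulA /\ (forall a b c, mulA (mulA a b) c = mulA a (mulA b c)) /\
  (forall a, (forall b, mulA a b = 0) -> a = 0) /\
  (forall a, (forall b, mulA b a = 0) -> a = 0).

(* Delta(a) in M(A(x)A)
   is given by its left action DL a and right action DR a on A (x) A. *)
Definition is_GMHC (DL DR : A -> A2 -> A2) (eps : A -> k)
  (T1 T2 T1inv T2inv : A2 -> A2) : Prop :=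
  (* Delta(a) is a multiplier of A (x) A *)
  (forall a x y, mul2 x (DL a y) = mul2 (DR a x) y) /\
  (forall (al : k) a b y, DL (al *: a + b) y = al *: DL a y + DL b y) /\
  (forall (al : k) a b y, DR (al *: a + b) y = al *: DR a y + DR b y) /\
  (forall a b y, DL (mulA a b) y = DL a (DL b y)) /\
  (forall a b y, DR (mulA a b) y = DR b (DR a y)) /\
  (* T1 (a (x) b) = Delta(a)(1 (x) b) in A (x) A *)
  lin T1 /\
  (forall a b x, mul2 (T1 (t2 a b)) x = DL a (lmulR b x) /\
                 mul2 x (T1 (t2 a b)) = rmulR (DR a x) b) /\
  (* T2 (a (x) b) = (a (x) 1) Delta(b) in A (x) A *)
  lin T2 /\
  (forall a b x, mul2 (T2 (t2 a b)) x = lmulL a (DL b x) /\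
                 mul2 x (T2 (t2 a b)) = DR b (rmulL x a)) /\
  (forall (al : k) x y, eps (al *: x + y) = al * eps x + eps y) /\
  (forall a b, eps_id eps (T1 (t2 a b)) = mulA a b) /\
  (forall a b, id_eps eps (T2 (t2 a b)) = mulA a b) /\
  cancel T1 T1inv /\ cancel T1inv T1 /\ cancel T2 T2inv /\ cancel T2inv T2 /\
  (* T1^-1 = (i (x) eps (x) i)(i (x) T1^-1)(Delta (x) i), covered on the left
     of the first leg by c (x) 1 (note (c (x) 1) Delta(a) = T2 (c (x) a)) *)
  (forall a b c, lmulL c (T1inv (t2 a b)) =
                 id_eps_id eps (id_tens T1inv (tens_r (T2 (t2 c a)) b))) /\
  (* T2^-1 = (i (x) eps (x) i)(T2^-1 (x) i)(i (x) Delta), covered on the right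
     of the last leg by 1 (x) c (note Delta(b)(1 (x) c) = T1 (b (x) c)) *)
  (forall a b c, rmulR (T2inv (t2 a b)) c =
                 id_eps_id eps (tens_id T2inv (tp A3 a (T1 (t2 b c))))).

End Ops.

(* Main.v *)
Require Import Defs.
From HB Require Import structures.
From mathcomp Require Import all_boot all_algebra.
From mathcomp Require Import boolp classical_sets.
From Stdlib Require Import ClassicalEpsilon.
Set Implicit Arguments. Unset Strict Implicit. Unset Printing Implicit Defensive.
Import GRing.Theory.
Local Open Scope ring_scope.

Section LinGen.
Variables (k : fieldType) (U V W : lmodType k).

Lemma linP (f : U -> V) : lin f -> forall a x y, f (a *: x + y) = a *: f x + f y.
Proof. by []. Qed.

Lemma lin0 (f : U -> V) : lin f -> f 0 = 0.
Proof.
move=> Hf; have := Hf 1 0 0; rewrite !scale1r addr0 => E.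
by apply: (addrI (f 0)); rewrite addr0 -E.
Qed.

Lemma linD (f : U -> V) : lin f -> forall x y, f (x + y) = f x + f y.
Proof. by move=> Hf x y; have := linP Hf 1 x y; rewrite !scale1r. Qed.

Lemma linZ (f : U -> V) : lin f -> forall a x, f (a *: x) = a *: f x.
Proof. by move=> Hf a x; have := linP Hf a x 0; rewrite !addr0 lin0 // addr0. Qed.

Lemma linN (f : U -> V) : lin f -> forall x, f (- x) = - f x.
Proof. by move=> Hf x; rewrite -scaleN1r linZ // scaleN1r. Qed.

Lemma linB (f : U -> V) : lin f -> forall x y, f (x - y) = f x - f y.
Proof. by move=> Hf x y; rewrite linD // linN. Qed.

Lemma lin_sum (f : U -> V) I (s : seq I) (F : I -> U) :
  lin f -> f (\sum_(i <- s) F i) = \sum_(i <- s) f (F i).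
Proof.
move=> Hf; elim: s => [|i s IH]; first by rewrite !big_nil lin0.
by rewrite !big_cons linD // IH.
Qed.

Lemma lin_comp (f : U -> V) (g : V -> W) : lin f -> lin g -> lin (fun x => g (f x)).
Proof. by move=> Hf Hg a x y; rewrite (linP Hf); exact: Hg. Qed.

Lemma lin_id : lin (fun x : U => x). Proof. by []. Qed.

Lemma lin_add (f g : U -> V) : lin f -> lin g -> lin (fun x => f x + g x).
Proof. by move=> Hf Hg a x y; rewrite (linP Hf) (linP Hg) scalerDr addrACA. Qed.

Lemma lin_scale (f : U -> V) c : lin f -> lin (fun x => c *: f x).
Proof. by move=> Hf a x y; rewrite (linP Hf) scalerDr !scalerA mulrC. Qed.

Lemma lin_cst0 : lin (fun _ : U => (0 : V)).
Proof. by move=> a x y; rewrite scaler0 addr0. Qed.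

Lemma bilinI (f : U -> V -> W) :
  (forall v a x y, f (a *: x + y) v = a *: f x v + f y v) ->
  (forall u a x y, f u (a *: x + y) = a *: f u x + f u y) -> bilin f.
Proof. by move=> H1 H2; split => [v|u] a x y; [apply: H1|apply: H2]. Qed.

End LinGen.

Section TensorGen.
Variables (k : fieldType) (U V : lmodType k) (T : tensor_product U V).

Lemma tlift_spec (W : lmodType k) (f : U -> V -> W) : bilin f ->
  lin (tlift T f) /\ forall u v, tlift T f (tp T u v) = f u v.
Proof.
move=> Hf; rewrite /tlift.
have [g [Hg _]] := tp_universal T Hf.
by apply: (epsilon_spec (inhabits (fun _ => 0))
  (fun g : T -> W => lin g /\ forall u v, g (tp T u v) = f u v)); exists g.
Qed.

Lemma tlift_lin (W : lmodType k) (f : U -> V -> W) : bilin f -> lin (tlift T f).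
Proof. by move=> /tlift_spec []. Qed.

Lemma tlift_tp (W : lmodType k) (f : U -> V -> W) : bilin f ->
  forall u v, tlift T f (tp T u v) = f u v.
Proof. by move=> /tlift_spec []. Qed.

Lemma tp_bil : bilin (tp T). Proof. exact: tp_bilin. Qed.

Lemma tpDl x y v : tp T (x + y) v = tp T x v + tp T y v.
Proof. by have [H _] := tp_bil; rewrite (linD (H v)). Qed.
Lemma tpZl a x v : tp T (a *: x) v = a *: tp T x v.
Proof. by have [H _] := tp_bil; rewrite (linZ (H v)). Qed.
Lemma tpDr u x y : tp T u (x + y) = tp T u x + tp T u y.
Proof. by have [_ H] := tp_bil; rewrite (linD (H u)). Qed.
Lemma tpZr a u x : tp T u (a *: x) = a *: tp T u x.
Proof. by have [_ H] := tp_bil; rewrite (linZ (H u)). Qed.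
Lemma tp0l v : tp T 0 v = 0.
Proof. by have [H _] := tp_bil; rewrite (lin0 (H v)). Qed.
Lemma tp0r u : tp T u 0 = 0.
Proof. by have [_ H] := tp_bil; rewrite (lin0 (H u)). Qed.
Lemma tpNl x v : tp T (- x) v = - tp T x v.
Proof. by have [H _] := tp_bil; rewrite (linN (H v)). Qed.
Lemma tpNr u x : tp T u (- x) = - tp T u x.
Proof. by have [_ H] := tp_bil; rewrite (linN (H u)). Qed.
Lemma tpBl x y v : tp T (x - y) v = tp T x v - tp T y v.
Proof. by rewrite tpDl tpNl. Qed.
Lemma tpBr u x y : tp T u (x - y) = tp T u x - tp T u y.
Proof. by rewrite tpDr tpNr. Qed.
Lemma tp_suml I (s : seq I) (F : I -> U) v :
  tp T (\sum_(i <- s) F i) v = \sum_(i <- s) tp T (F i) v.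
Proof. by have [H _] := tp_bil; rewrite (lin_sum _ _ (H v)). Qed.
Lemma tp_sumr I (s : seq I) u (F : I -> V) :
  tp T u (\sum_(i <- s) F i) = \sum_(i <- s) tp T u (F i).
Proof. by have [_ H] := tp_bil; rewrite (lin_sum _ _ (H u)). Qed.

Lemma tp_ext (W : lmodType k) (g1 g2 : T -> W) : lin g1 -> lin g2 ->
  (forall u v, g1 (tp T u v) = g2 (tp T u v)) -> forall z, g1 z = g2 z.
Proof.
move=> H1 H2 H z.
have Hb : bilin (fun u v => g1 (tp T u v)).
  by apply: bilinI => [v a x y|u a x y]; rewrite ?tpDl ?tpZl ?tpDr ?tpZr linD // linZ.
have [g [_ Hu]] := tp_universal T Hb.
have E1 := Hu g1 (conj H1 (fun _ _ => erefl)).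
have E2 := Hu g2 (conj H2 (fun u v => esym (H u v))).
by rewrite -E1 -E2.
Qed.

End TensorGen.


Section Ext.
Local Open Scope classical_set_scope.
Variables (k : fieldType) (V : lmodType k).

Definition sub_sp (W : V -> Prop) := W 0 /\ forall a x y, W x -> W y -> W (a *: x + y).
Definition linf (f : V -> k) := forall a x y, f (a *: x + y) = a * f x + f y.

Definition gok (G : set (V * k)) :=
  (forall x a b, G (x, a) -> G (x, b) -> a = b) /\
  (forall c x y a b, G (x, a) -> G (y, b) -> G (c *: x + y, c * a + b)).

Lemma solve_v (w w' v : V) l l' : l != l' -> w + l *: v = w' + l' *: v -> v = (l - l')^-1 *: (w' - w).
Proof.
move=> nl E; have nl' : l - l' != 0 by rewrite subr_eq0.
apply: (scalerI nl'); rewrite scalerA divff // scale1r scalerBl.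
by rewrite -[l *: v](addKr w) E addrA addrK addrC.
Qed.

Lemma ext_functional (W : V -> Prop) v : sub_sp W -> ~ W v ->
  exists f, linf f /\ f v = 1 /\ forall w, W w -> f w = 0.
Proof.
move=> [W0 WL] Wv.
have WB : forall x y, W x -> W y -> W (x - y).
  by move=> x y Wx Wy; rewrite addrC -scaleN1r; apply: WL.
have WZ : forall a x, W x -> W (a *: x).
  by move=> a x Wx; rewrite -[_ *: _]addr0; apply: WL.
pose G0 : set (V * k) := fun p => exists w l, W w /\ p = (w + l *: v, l).
have G0ok : gok G0.
  split.
    move=> x a b [w [l [Ww [E1 E2]]]] [w' [l' [Ww' [E3 E4]]]].
    case: E1 E2 E3 E4 => -> -> [] E ->.
    case: (eqVneq l l') => // nl; exfalso; apply: Wv.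
    by rewrite (solve_v nl E); apply: WZ; apply: WB.
  move=> c x y a b [w [l [Ww [E1 E2]]]] [w' [l' [Ww' [E3 E4]]]].
  case: E1 E2 E3 E4 => -> -> [] -> ->.
  exists (c *: w + w'), (c * l + l'); split; first exact: WL.
  congr (_, _); rewrite scalerDr scalerDl scalerA.
  by rewrite addrACA.
pose P : set (set (V * k)) := fun G => gok (G `|` G0).
have Pch : forall F : set (set (V * k)), F `<=` P -> total_on F subset ->
    P (\bigcup_(X in F) X).
  move=> F FP Ftot.
  have two : forall p q, ((\bigcup_(X in F) X) `|` G0) p ->
      ((\bigcup_(X in F) X) `|` G0) q ->
      (exists Y, F Y /\ (Y `|` G0) p /\ (Y `|` G0) q) \/ (G0 p /\ G0 q).
    move=> p q [[X FX Xp]|G0p] [[Y FY Yq]|G0q].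
    - have [XY|YX] := Ftot X Y FX FY.
        by left; exists Y; split => //; split; left => //; apply: XY.
      by left; exists X; split => //; split; left => //; apply: YX.
    - by left; exists X; split => //; split; [left|right].
    - by left; exists Y; split => //; split; [right|left].
    - by right.
  split.
    move=> x a b Hp Hq; have [[Y [FY [Yp Yq]]]|[Gp Gq]] := two _ _ Hp Hq.
      by have [H _] := FP Y FY; apply: H Yp Yq.
    by have [H _] := G0ok; apply: H Gp Gq.
  move=> c x y a b Hp Hq; have [[Y [FY [Yp Yq]]]|[Gp Gq]] := two _ _ Hp Hq.
    have [_ H] := FP Y FY; case: (H c x y a b Yp Yq) => [Yr|Gr]; last by right.
    by left; exists Y.
  by have [_ H] := G0ok; right; apply: H Gp Gq.
have [A0 [PA Amax]] := Zorn_bigcup Pch.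
pose H := A0 `|` G0.
have [Hfun Hlin] : gok H := PA.
have H00 : H (0, 0) by right; exists 0, 0; split => //; rewrite scale0r addr0.
have HB : forall x y a b, H (x, a) -> H (y, b) -> H (x - y, a - b).
  move=> x y a b Hx Hy; have := Hlin (-1) y x b a Hy Hx.
  by rewrite scaleN1r mulN1r addrC [- b + _]addrC.
have HZ : forall c x a, H (x, a) -> H (c *: x, c * a).
  by move=> c x a Hx; have := Hlin c x 0 a 0 Hx H00; rewrite !addr0.
have Htot : forall u, exists a, H (u, a).
  move=> u; apply: contrapT => nu.
  pose H' : set (V * k) := fun p => exists x a l, H (x, a) /\ p = (x + l *: u, a).
  have HH' : H `<=` H' by move=> [x a] Hp; exists x, a, 0; rewrite scale0r addr0.
  have H'ok : gok H'.
    split.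
      move=> x a b [x1 [a1 [l1 [H1 E1]]]] [x2 [a2 [l2 [H2 E2]]]].
      case: E1 E2 => -> -> [] E ->.
      case: (eqVneq l1 l2) => [El|nl].
        by subst l2; move/addIr: E => E; subst x2; apply: Hfun H1 H2.
      exfalso; apply: nu; exists ((l1 - l2)^-1 * (a2 - a1)).
      by rewrite (solve_v nl E); apply: HZ; apply: HB.
    move=> c x y a b [x1 [a1 [l1 [H1 E1]]]] [x2 [a2 [l2 [H2 E2]]]].
    case: E1 E2 => -> -> [] -> ->.
    exists (c *: x1 + x2), (c * a1 + a2), (c * l1 + l2); split; first exact: Hlin.
    by congr (_, _); rewrite scalerDr scalerDl scalerA addrACA.
  have PH' : P H'.
    have E : forall p, (H' `|` G0) p -> H' p by move=> p [//|Gp]; apply: HH'; right.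
    split.
      by move=> x a b /E Hp /E Hq; have [F _] := H'ok; apply: F Hp Hq.
    by move=> c x y a b /E Hp /E Hq; have [_ F] := H'ok; left; apply: F Hp Hq.
  apply: (Amax H') PH'; split.
    by move=> p Ap; apply: HH'; left.
  move=> sub; apply: nu; exists 0.
  have : H' (u, 0) by exists 0, 0, 1; rewrite scale1r add0r.
  by move=> /sub Ap; left.
pose f := fun x => epsilon (inhabits 0) (fun a => H (x, a)).
have Hf : forall x, H (x, f x).
  by move=> x; apply: (epsilon_spec (inhabits 0) (fun a => H (x, a))); apply: Htot.
exists f; split.
  by move=> a x y; apply: (Hfun (a *: x + y)); [apply: Hf| apply: Hlin; apply: Hf].
split.
  apply: (Hfun v); first exact: Hf.
  by right; exists 0, 1; split => //; rewrite add0r scale1r.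
move=> w Ww; apply: (Hfun w); first exact: Hf.
by right; exists w, 0; split => //; rewrite scale0r addr0.
Qed.

End Ext.

Section Linf.
Variables (k : fieldType) (V : lmodType k) (f : V -> k) (lf : linf f).
Lemma linf0 : f 0 = 0.
Proof. have := lf 1 0 0; rewrite !mul1r scale1r addr0 => E.
by apply: (addrI (f 0)); rewrite addr0 -E. Qed.
Lemma linfD x y : f (x + y) = f x + f y.
Proof. by have := lf 1 x y; rewrite scale1r mul1r. Qed.
Lemma linfZ a x : f (a *: x) = a * f x.
Proof. by have := lf a x 0; rewrite !addr0 linf0 addr0. Qed.
Lemma linfN x : f (- x) = - f x.
Proof. by rewrite -scaleN1r linfZ mulN1r. Qed.
Lemma linfB x y : f (x - y) = f x - f y.
Proof. by rewrite linfD linfN. Qed.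
Lemma linf_lin : lin (f : V -> k^o).
Proof. exact: lf. Qed.
End Linf.

Section Span.
Variables (k : fieldType) (U V : lmodType k) (T : tensor_product U V).

Lemma tp_span (z : T) : exists s : seq (U * V), z = \sum_(p <- s) tp T p.1 p.2.
Proof.
apply: contrapT => nz.
pose W := fun z : T => exists s : seq (U * V), z = \sum_(p <- s) tp T p.1 p.2.
have sW : sub_sp W.
  split; first by exists [::]; rewrite big_nil.
  move=> a x y [s ->] [s' ->].
  exists ([seq (a *: p.1, p.2) | p <- s] ++ s').
  rewrite big_cat big_map /= scaler_sumr; congr (_ + _).
  by apply: eq_bigr => p _; rewrite tpZl.
have [f [lf [fz f0]]] := ext_functional sW nz.
have E := tp_ext (linf_lin lf) (@lin_cst0 _ T k^o) (fun u v => f0 _ (ex_intro _ [:: (u, v)] (esym (big_seq1 _ _ _)))).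
by move: fz; rewrite E => /esym/eqP; rewrite oner_eq0.
Qed.

Lemma slice_bil (f : V -> k) : linf f -> bilin (fun (u : U) (v : V) => f v *: u).
Proof.
move=> lf; apply: bilinI => [v a x y|u a x y]; first by rewrite scalerDr scalerA mulrC -scalerA.
by rewrite lf scalerDl scalerA.
Qed.

Lemma det_seq n (s : seq (U * V)) : size s = n ->
  (forall f, linf f -> \sum_(p <- s) f p.2 *: p.1 = 0) ->
  \sum_(p <- s) tp T p.1 p.2 = 0.
Proof.
elim: n s => [|n IH] [|[x0 y0] s] //=; first by rewrite big_nil.
move=> [Hs] Hf.
case: (eqVneq y0 0) Hf => [->|ny] Hf.
  rewrite big_cons tp0r add0r; apply: IH => // f lf.
  by have := Hf f lf; rewrite big_cons /= (linf0 lf) scale0r add0r.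
have sW : sub_sp (fun w : V => w = 0).
  by split => // a x y -> ->; rewrite scaler0 addr0.
have [f0 [lf0 [f0y _]]] := ext_functional sW (v := y0) (fun E => negP ny (introT eqP E)).
pose s' := [seq (p.1, p.2 - f0 p.2 *: y0) | p <- s].
pose x0' := x0 + \sum_(p <- s) f0 p.2 *: p.1.
have Eq1 : forall f, linf f -> f y0 *: x0 + \sum_(p <- s) f p.2 *: p.1 =
    f y0 *: x0' + \sum_(p <- s') f p.2 *: p.1.
  move=> f lf; rewrite big_map /= scalerDr scaler_sumr -addrA; congr (_ + _).
  rewrite -big_split /=; apply: eq_bigr => p _.
  by rewrite (linfB lf) (linfZ lf) scalerBl scalerA mulrC -scalerA addrC subrK.
have Eq2 : tp T x0 y0 + \sum_(p <- s) tp T p.1 p.2 =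
    tp T x0' y0 + \sum_(p <- s') tp T p.1 p.2.
  rewrite big_map /= tpDl tp_suml -addrA; congr (_ + _).
  rewrite -big_split /=; apply: eq_bigr => p _.
  by rewrite tpBr tpZr tpZl addrC subrK.
have x00 : x0' = 0.
  have := Hf f0 lf0; rewrite big_cons /= Eq1 // f0y scale1r big_map big1 ?addr0 //.
  by move=> p _; rewrite /= (linfB lf0) (linfZ lf0) f0y mulr1 subrr scale0r.
have Hs' : \sum_(p <- s') tp T p.1 p.2 = 0.
  apply: IH; first by rewrite size_map.
  by move=> f lf; have := Hf f lf; rewrite big_cons /= Eq1 // x00 scaler0 add0r.
by rewrite big_cons /= Eq2 x00 tp0l Hs' addr0.
Qed.

Lemma det_r (z : T) : (forall f, linf f -> tlift T (fun u v => f v *: u) z = 0) -> z = 0.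
Proof.
have [s ->] := tp_span z => Hf; apply: (det_seq (erefl _)) => f lf.
have := Hf f lf; rewrite (lin_sum _ _ (tlift_lin (slice_bil lf))).
by under eq_bigr => p _ do rewrite (tlift_tp T (slice_bil lf)).
Qed.

End Span.

Section TPP.
Variables (k : fieldType) (U V : lmodType k) (T : tensor_product U V).
Lemma tpPl a x y v : tp T (a *: x + y) v = a *: tp T x v + tp T y v.
Proof. by rewrite tpDl tpZl. Qed.
Lemma tpPr a u x y : tp T u (a *: x + y) = a *: tp T u x + tp T u y.
Proof. by rewrite tpDr tpZr. Qed.
End TPP.

Section Calc.
Variables (k : fieldType) (A : lmodType k) (mulA : A -> A -> A)
  (A2 : tensor_product A A) (A3 : tensor_product A A2).
Hypothesis Hbil : bilin mulA.
Hypothesis Hassoc : forall a b c, mulA (mulA a b) c = mulA a (mulA b c).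
Hypothesis Hndl : forall a, (forall b, mulA a b = 0) -> a = 0.
Hypothesis Hndr : forall a, (forall b, mulA b a = 0) -> a = 0.
Local Notation t2 := (tp A2).
Local Notation t3 := (tp A3).
Local Notation m := mulA.

Lemma mulAPl a x y v : m (a *: x + y) v = a *: m x v + m y v.
Proof. by have [H _] := Hbil; apply: H. Qed.
Lemma mulAPr a u x y : m u (a *: x + y) = a *: m u x + m u y.
Proof. by have [_ H] := Hbil; apply: H. Qed.
Lemma mulADl x y v : m (x + y) v = m x v + m y v.
Proof. by have [H _] := Hbil; apply: (linD (H v)). Qed.
Lemma mulADr u x y : m u (x + y) = m u x + m u y.
Proof. by have [_ H] := Hbil; apply: (linD (H u)). Qed.
Lemma mulAZl a x v : m (a *: x) v = a *: m x v.
Proof. by have [H _] := Hbil; apply: (linZ (H v)). Qed.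
Lemma mulAZr a u x : m u (a *: x) = a *: m u x.
Proof. by have [_ H] := Hbil; apply: (linZ (H u)). Qed.
Lemma mulA0l v : m 0 v = 0.
Proof. by have [H _] := Hbil; apply: (lin0 (H v)). Qed.
Lemma mulA0r u : m u 0 = 0.
Proof. by have [_ H] := Hbil; apply: (lin0 (H u)). Qed.
Lemma mulANl x v : m (- x) v = - m x v.
Proof. by have [H _] := Hbil; apply: (linN (H v)). Qed.
Lemma mulANr u x : m u (- x) = - m u x.
Proof. by have [_ H] := Hbil; apply: (linN (H u)). Qed.
Lemma mulABl x y v : m (x - y) v = m x v - m y v.
Proof. by rewrite mulADl mulANl. Qed.
Lemma mulABr u x y : m u (x - y) = m u x - m u y.
Proof. by rewrite mulADr mulANr. Qed.

Lemma ndl_eq a a' : (forall b, m a b = m a' b) -> a = a'.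
Proof.
move=> H; apply/eqP; rewrite -subr_eq0; apply/eqP; apply: Hndl => b.
by rewrite mulABl H subrr.
Qed.
Lemma ndr_eq a a' : (forall b, m b a = m b a') -> a = a'.
Proof.
move=> H; apply/eqP; rewrite -subr_eq0; apply/eqP; apply: Hndr => b.
by rewrite mulABr H subrr.
Qed.

Ltac bil_tac := apply: bilinI => ? ? ? ?;
  rewrite ?mulAPl ?mulAPr ?tpPl ?tpPr ?scalerDr ?scalerA ?mulrC //.

Lemma lmulL_bil c : bilin (fun u v => t2 (m c u) v). Proof. by bil_tac. Qed.
Lemma rmulL_bil c : bilin (fun u v => t2 (m u c) v). Proof. by bil_tac. Qed.
Lemma lmulR_bil c : bilin (fun u v => t2 u (m c v)). Proof. by bil_tac. Qed.
Lemma rmulR_bil c : bilin (fun u v => t2 u (m v c)). Proof. by bil_tac. Qed.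
Lemma flip_bil : bilin (fun u v => t2 v u). Proof. by bil_tac. Qed.
Lemma mA_bil : bilin m. Proof. exact: Hbil. Qed.

Definition m2 (x : A2) : A := tlift A2 m x.

Lemma lmulL_tp c u v : lmulL m c (t2 u v) = t2 (m c u) v.
Proof. exact: (tlift_tp A2 (lmulL_bil c)). Qed.
Lemma rmulL_tp c u v : rmulL m (t2 u v) c = t2 (m u c) v.
Proof. exact: (tlift_tp A2 (rmulL_bil c)). Qed.
Lemma lmulR_tp c u v : lmulR m c (t2 u v) = t2 u (m c v).
Proof. exact: (tlift_tp A2 (lmulR_bil c)). Qed.
Lemma rmulR_tp c u v : rmulR m (t2 u v) c = t2 u (m v c).
Proof. exact: (tlift_tp A2 (rmulR_bil c)). Qed.
Lemma flip_tp u v : flip2 (t2 u v) = t2 v u.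
Proof. exact: (tlift_tp A2 flip_bil). Qed.
Lemma m2_tp u v : m2 (t2 u v) = m u v.
Proof. exact: (tlift_tp A2 mA_bil). Qed.

Lemma lmulL_lin c : lin (@lmulL _ _ m A2 c). Proof. exact: (tlift_lin (lmulL_bil c)). Qed.
Lemma rmulL_lin c : lin (fun x : A2 => rmulL m x c). Proof. exact: (tlift_lin (rmulL_bil c)). Qed.
Lemma lmulR_lin c : lin (@lmulR _ _ m A2 c). Proof. exact: (tlift_lin (lmulR_bil c)). Qed.
Lemma rmulR_lin c : lin (fun x : A2 => rmulR m x c). Proof. exact: (tlift_lin (rmulR_bil c)). Qed.
Lemma flip_lin : lin (@flip2 _ _ A2). Proof. exact: (tlift_lin flip_bil). Qed.
Lemma m2_lin : lin m2. Proof. exact: (tlift_lin mA_bil). Qed.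

Lemma lmulLP c a (x y : A2) : lmulL m c (a *: x + y) = a *: lmulL m c x + lmulL m c y.
Proof. exact: lmulL_lin. Qed.
Lemma rmulLP c a (x y : A2) : rmulL m (a *: x + y) c = a *: rmulL m x c + rmulL m y c.
Proof. exact: (rmulL_lin c). Qed.
Lemma lmulRP c a (x y : A2) : lmulR m c (a *: x + y) = a *: lmulR m c x + lmulR m c y.
Proof. exact: lmulR_lin. Qed.
Lemma rmulRP c a (x y : A2) : rmulR m (a *: x + y) c = a *: rmulR m x c + rmulR m y c.
Proof. exact: (rmulR_lin c). Qed.
Lemma flipP a x y : flip2 (a *: x + y) = a *: flip2 x + flip2 y :> A2.
Proof. exact: flip_lin. Qed.
Lemma m2P a (x y : A2) : m2 (a *: x + y) = a *: m2 x + m2 y.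
Proof. exact: m2_lin. Qed.

Section EpsMaps.
Variable e : A -> k.
Hypothesis le : linf e.
Lemma eps_id_bil : bilin (fun u v : A => e u *: v).
Proof. by apply: bilinI => ? ? ? ?; rewrite ?le ?scalerDl ?scalerDr ?scalerA // mulrC. Qed.
Lemma id_eps_bil : bilin (fun u v : A => e v *: u).
Proof. by apply: bilinI => ? ? ? ?; rewrite ?le ?scalerDl ?scalerDr ?scalerA // mulrC. Qed.
Lemma eps_id_tp u v : eps_id e (t2 u v) = e u *: v.
Proof. exact: (tlift_tp A2 eps_id_bil). Qed.
Lemma id_eps_tp u v : id_eps e (t2 u v) = e v *: u.
Proof. exact: (tlift_tp A2 id_eps_bil). Qed.
Lemma eps_id_lin : lin (eps_id (A2:=A2) e). Proof. exact: (tlift_lin eps_id_bil). Qed.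
Lemma id_eps_lin : lin (id_eps (A2:=A2) e). Proof. exact: (tlift_lin id_eps_bil). Qed.
Lemma eps_idP a (x y : A2) : eps_id e (a *: x + y) = a *: eps_id e x + eps_id e y :> A.
Proof. exact: eps_id_lin. Qed.
Lemma id_epsP a (x y : A2) : id_eps e (a *: x + y) = a *: id_eps e x + id_eps e y :> A.
Proof. exact: id_eps_lin. Qed.
End EpsMaps.

Definition mul2_in (a b : A) : A -> A -> A2 := fun c d => t2 (m a c) (m b d).
Lemma mul2_in_bil a b : bilin (mul2_in a b). Proof. by rewrite /mul2_in; bil_tac. Qed.
Lemma mul2_out_bil (y : A2) : bilin (fun a b => tlift A2 (mul2_in a b) y).
Proof.
apply: bilinI => [v a x x'|u a x x']; move: y; apply: tp_ext.
- exact: (tlift_lin (mul2_in_bil _ _)).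
- exact: lin_add (lin_scale _ (tlift_lin (mul2_in_bil _ _))) (tlift_lin (mul2_in_bil _ _)).
- by move=> c d; rewrite !(tlift_tp A2 (mul2_in_bil _ _)) /mul2_in mulAPl tpPl.
- exact: (tlift_lin (mul2_in_bil _ _)).
- exact: lin_add (lin_scale _ (tlift_lin (mul2_in_bil _ _))) (tlift_lin (mul2_in_bil _ _)).
- by move=> c d; rewrite !(tlift_tp A2 (mul2_in_bil _ _)) /mul2_in mulAPl tpPr.
Qed.

Lemma mul2_tp a b c d : mul2 m (t2 a b) (t2 c d) = t2 (m a c) (m b d).
Proof.
by rewrite /mul2 (tlift_tp A2 (mul2_out_bil _)) (tlift_tp A2 (mul2_in_bil _ _)).
Qed.
Lemma mul2_linl (y : A2) : lin (fun x => mul2 m x y).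
Proof. exact: (tlift_lin (mul2_out_bil y)). Qed.
Lemma mul2_linr (x : A2) : lin (mul2 m x).
Proof.
move=> a y y'; move: x; apply: tp_ext.
- exact: mul2_linl.
- exact: (lin_add (lin_scale _ (mul2_linl _)) (mul2_linl _)).
move=> u v; rewrite /mul2 !(tlift_tp A2 (mul2_out_bil _)).
exact: (tlift_lin (mul2_in_bil _ _)).
Qed.
Lemma mul2Pl a (x y z : A2) : mul2 m (a *: x + y) z = a *: mul2 m x z + mul2 m y z.
Proof. exact: (mul2_linl z). Qed.
Lemma mul2Pr a (x y z : A2) : mul2 m z (a *: x + y) = a *: mul2 m z x + mul2 m z y.
Proof. exact: (mul2_linr z). Qed.

End Calc.

Lemma lin_inv (k : fieldType) (U : lmodType k) (F G : U -> U) :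
  lin F -> cancel F G -> cancel G F -> lin G.
Proof.
move=> HF c1 c2 a x y.
by rewrite -{1}(c2 x) -{1}(c2 y) -(linP HF) c1.
Qed.

Section Calc2.
Variables (k : fieldType) (A : lmodType k) (mulA : A -> A -> A)
  (A2 : tensor_product A A) (A3 : tensor_product A A2).
Hypothesis Hbil : bilin mulA.
Hypothesis Hassoc : forall a b c, mulA (mulA a b) c = mulA a (mulA b c).
Hypothesis Hndl : forall a, (forall b, mulA a b = 0) -> a = 0.
Hypothesis Hndr : forall a, (forall b, mulA b a = 0) -> a = 0.
Local Notation t2 := (tp A2).
Local Notation t3 := (tp A3).
Local Notation m := mulA.
Local Notation mul2 := (mul2 mulA (A2:=A2)).
Local Notation lmulL := (lmulL mulA (A2:=A2)).
Local Notation rmulL := (rmulL mulA (A2:=A2)).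
Local Notation lmulR := (lmulR mulA (A2:=A2)).
Local Notation rmulR := (rmulR mulA (A2:=A2)).
Local Notation flip := (flip2 (A2:=A2)).
Local Notation m2 := (m2 mulA (A2:=A2)).

Ltac lin_tac := let a := fresh "a" in let x := fresh "x" in let y := fresh "y" in
  move=> a x y; rewrite ?(mul2Pl, mul2Pr, lmulLP, rmulLP, lmulRP, rmulRP, flipP,
     m2P, eps_idP, id_epsP, mulAPl, mulAPr) //.

Ltac pure_tac := rewrite ?(mul2_tp, lmulL_tp, rmulL_tp, lmulR_tp, rmulR_tp, flip_tp,
     m2_tp, eps_id_tp, id_eps_tp) //.

Lemma mul2A x y z : mul2 (mul2 x y) z = mul2 x (mul2 y z).
Proof.
move: x; apply: tp_ext; [lin_tac|lin_tac|move=> a b].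
move: y; apply: tp_ext; [lin_tac|lin_tac|move=> c d].
move: z; apply: tp_ext; [lin_tac|lin_tac|move=> e f].
by pure_tac; rewrite !Hassoc.
Qed.

Lemma mul2_lmulR c y x : mul2 (lmulR c y) x = lmulR c (mul2 y x).
Proof.
move: y; apply: tp_ext; [lin_tac|lin_tac|move=> a b].
move: x; apply: tp_ext; [lin_tac|lin_tac|move=> e f].
by pure_tac; rewrite Hassoc.
Qed.

Lemma lmulR_flip c z : lmulR c (flip z) = flip (lmulL c z).
Proof. by move: z; apply: tp_ext; [lin_tac|lin_tac|move=> a b; pure_tac]. Qed.

Lemma flip_lmulR c z : flip (lmulR c z) = lmulL c (flip z).
Proof. by move: z; apply: tp_ext; [lin_tac|lin_tac|move=> a b; pure_tac]. Qed.

Lemma flipK z : flip (flip z) = z.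
Proof. by move: z; apply: tp_ext; [lin_tac|lin_tac|move=> a b; pure_tac]. Qed.

Lemma mul2_flip y x : mul2 (flip y) x = flip (mul2 y (flip x)).
Proof.
move: y; apply: tp_ext; [lin_tac|lin_tac|move=> a b].
by move: x; apply: tp_ext; [lin_tac|lin_tac|move=> e f; pure_tac].
Qed.

Lemma mul2_rmulL y b x : mul2 (rmulL y b) x = mul2 y (lmulL b x).
Proof.
move: y; apply: tp_ext; [lin_tac|lin_tac|move=> c d].
by move: x; apply: tp_ext; [lin_tac|lin_tac|move=> e f; pure_tac; rewrite Hassoc].
Qed.

Lemma mul2_rmulR y b x : mul2 (rmulR y b) x = mul2 y (lmulR b x).
Proof.
move: y; apply: tp_ext; [lin_tac|lin_tac|move=> c d].
by move: x; apply: tp_ext; [lin_tac|lin_tac|move=> e f; pure_tac; rewrite Hassoc].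
Qed.

Lemma mul2_tpl a b x : mul2 (t2 a b) x = lmulL a (lmulR b x).
Proof. by move: x; apply: tp_ext; [lin_tac|lin_tac|move=> e f; pure_tac]. Qed.

Lemma mul2_tpl' a b x : mul2 (t2 a b) x = lmulR b (lmulL a x).
Proof. by move: x; apply: tp_ext; [lin_tac|lin_tac|move=> e f; pure_tac]. Qed.

Lemma flip_lmulR_flip a w : flip (lmulR a (flip w)) = lmulL a w.
Proof. by move: w; apply: tp_ext; [lin_tac|lin_tac|move=> e f; pure_tac]. Qed.

Lemma lmulR_lmulR z b x : lmulR z (lmulR b x) = lmulR (m z b) x.
Proof. by move: x; apply: tp_ext; [lin_tac|lin_tac|move=> e f; pure_tac; rewrite Hassoc]. Qed.

Lemma lmulL_linc a u u' y : lmulL (a *: u + u') y = a *: lmulL u y + lmulL u' y.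
Proof.
move: y; apply: tp_ext; [lin_tac|exact: lin_add (lin_scale _ (lmulL_lin _ _)) (lmulL_lin _ _)|].
by move=> e f; pure_tac; rewrite mulAPl // tpPl.
Qed.

Lemma m2_lmulL u z : m2 (lmulL u z) = m u (m2 z).
Proof. by move: z; apply: tp_ext; [lin_tac|lin_tac|move=> e f; pure_tac]. Qed.

Lemma m2_rmulR z b : m2 (rmulR z b) = m (m2 z) b.
Proof. by move: z; apply: tp_ext; [lin_tac|lin_tac|move=> e f; pure_tac]. Qed.

Section E.
Variable e : A -> k.
Hypothesis le : linf e.

Lemma eps_id_lmulR c y : eps_id e (lmulR c y) = m c (eps_id e y).
Proof. by move: y; apply: tp_ext; [lin_tac|lin_tac|move=> a b; pure_tac; rewrite mulAZr]. Qed.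

Lemma eps_id_flip y : eps_id e (flip y) = id_eps e y.
Proof. by move: y; apply: tp_ext; [lin_tac|lin_tac|move=> a b; pure_tac]. Qed.

Lemma id_eps_rmulL y b : id_eps e (rmulL y b) = m (id_eps e y) b.
Proof. by move: y; apply: tp_ext; [lin_tac|lin_tac|move=> a c; pure_tac; rewrite mulAZl]. Qed.

Lemma eps_id_rmulR y b : eps_id e (rmulR y b) = m (eps_id e y) b.
Proof. by move: y; apply: tp_ext; [lin_tac|lin_tac|move=> a c; pure_tac; rewrite mulAZl]. Qed.

Lemma eps_id_lmulL (emul : forall x y, e (m x y) = e x * e y) u y :
  eps_id e (lmulL u y) = e u *: eps_id e y.
Proof.
move: y; apply: tp_ext; [lin_tac|apply: lin_scale; exact: eps_id_lin|].
by move=> a c; pure_tac; rewrite emul scalerA.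
Qed.

Lemma ND_L1 z c d : id_eps e (mul2 z (t2 c d)) = m (id_eps e (rmulR z d)) c.
Proof. by move: z; apply: tp_ext; [lin_tac|lin_tac|move=> a b; pure_tac; rewrite mulAZl]. Qed.
Lemma ND_L2 z d : eps_id e (rmulR z d) = m (eps_id e z) d.
Proof. by move: z; apply: tp_ext; [lin_tac|lin_tac|move=> a b; pure_tac; rewrite mulAZl]. Qed.
Lemma ND_L3 z c d : id_eps e (mul2 (t2 c d) z) = m c (id_eps e (lmulR d z)).
Proof. by move: z; apply: tp_ext; [lin_tac|lin_tac|move=> a b; pure_tac; rewrite mulAZr]. Qed.
Lemma ND_L4 z d : eps_id e (lmulR d z) = m d (eps_id e z).
Proof. by move: z; apply: tp_ext; [lin_tac|lin_tac|move=> a b; pure_tac; rewrite mulAZr]. Qed.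
Lemma eps_id_flip' z : eps_id e z = id_eps e (flip z).
Proof. by move: z; apply: tp_ext; [lin_tac|lin_tac|move=> a b; pure_tac]. Qed.
End E.

Lemma det_l (z : A2) : (forall f, linf f -> eps_id f z = 0) -> z = 0.
Proof.
move=> H; rewrite -(flipK z); have -> : flip z = 0.
  by apply: det_r => f lf; have := H f lf; rewrite (eps_id_flip' lf).
exact: (lin0 (flip_lin (A2:=A2))).
Qed.

Lemma ND2r (z : A2) : (forall x, mul2 z x = 0) -> z = 0.
Proof.
move=> H.
have Hd : forall d, rmulR z d = 0.
  move=> d; apply: det_r => f lf; change (id_eps f (rmulR z d) = 0); apply: Hndl => c.
  by rewrite -(ND_L1 lf) H (lin0 (id_eps_lin lf)).
apply: det_l => f lf; apply: Hndl => d.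
by rewrite -(ND_L2 lf) Hd (lin0 (eps_id_lin lf)).
Qed.

Lemma ND2l (z : A2) : (forall x, mul2 x z = 0) -> z = 0.
Proof.
move=> H.
have Hd : forall d, lmulR d z = 0.
  move=> d; apply: det_r => f lf; change (id_eps f (lmulR d z) = 0); apply: Hndr => c.
  by rewrite -(ND_L3 lf) H (lin0 (id_eps_lin lf)).
apply: det_l => f lf; apply: Hndr => d.
by rewrite -(ND_L4 lf) Hd (lin0 (eps_id_lin lf)).
Qed.

Lemma ND2r_eq (z z' : A2) : (forall x, mul2 z x = mul2 z' x) -> z = z'.
Proof.
move=> H; apply/eqP; rewrite -subr_eq0; apply/eqP; apply: ND2r => x.
by rewrite -scaleN1r addrC mul2Pl // scaleN1r H addrC subrr.
Qed.

Lemma ND2l_eq (z z' : A2) : (forall x, mul2 x z = mul2 x z') -> z = z'.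
Proof.
move=> H; apply/eqP; rewrite -subr_eq0; apply/eqP; apply: ND2l => x.
by rewrite -scaleN1r addrC mul2Pr // scaleN1r H addrC subrr.
Qed.

Section A3ops.
Variable e : A -> k.
Hypothesis le : linf e.
Variable F : A2 -> A2.
Hypothesis lF : lin F.

Lemma tens_r_bil c : bilin (fun (u v : A) => t3 u (t2 v c)).
Proof. by apply: bilinI => ? ? ? ?; rewrite ?tpPl ?tpPr ?mulAPl. Qed.
Lemma id_eps_id_bil : bilin (fun (u : A) (y : A2) => t2 u (eps_id e y)).
Proof. by apply: bilinI => ? ? ? ?; rewrite ?eps_idP ?tpPl ?tpPr. Qed.
Lemma id_tens_bil : bilin (fun (u : A) (y : A2) => t3 u (F y)).
Proof. by apply: bilinI => ? ? ? ?; rewrite ?tpPl ?tpPr ?(linP lF) ?tpPr. Qed.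

Lemma tens_r_tp u v c : tens_r A3 (t2 u v) c = t3 u (t2 v c).
Proof. exact: (tlift_tp A2 (tens_r_bil c)). Qed.
Lemma id_eps_id_tp u y : id_eps_id e (t3 u y) = t2 u (eps_id e y).
Proof. exact: (tlift_tp A3 id_eps_id_bil). Qed.
Lemma id_tens_tp u y : id_tens F (t3 u y) = t3 u (F y).
Proof. exact: (tlift_tp A3 id_tens_bil). Qed.

Lemma tens_rP a x y c : tens_r A3 (a *: x + y) c = a *: tens_r A3 x c + tens_r A3 y c.
Proof. exact: (tlift_lin (tens_r_bil c)). Qed.
Lemma id_eps_idP a (x y : A3) : id_eps_id e (a *: x + y) = a *: id_eps_id e x + id_eps_id e y.
Proof. exact: (tlift_lin id_eps_id_bil). Qed.
Lemma id_tensP a (x y : A3) : id_tens F (a *: x + y) = a *: id_tens F x + id_tens F y.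
Proof. exact: (tlift_lin id_tens_bil). Qed.

Lemma coq_bil d : bilin (fun (u v : A) => m u (eps_id e (F (t2 v d)))).
Proof.
apply: bilinI => ? ? ? ?; rewrite ?mulAPl //.
by rewrite tpPl (linP lF) eps_idP // mulAPr.
Qed.

Lemma coq_m2 (Y : A2) d :
  m2 (id_eps_id e (id_tens F (tens_r A3 Y d))) =
  tlift A2 (fun u v => m u (eps_id e (F (t2 v d)))) Y.
Proof.
move: Y; apply: tp_ext.
- by move=> a x y; rewrite tens_rP id_tensP id_eps_idP m2P.
- exact: (tlift_lin (coq_bil d)).
move=> u v; rewrite tens_r_tp id_tens_tp id_eps_id_tp m2_tp //.
by rewrite (tlift_tp A2 (coq_bil d)).
Qed.
End A3ops.

End Calc2.

Section Alg.
Variables (k : fieldType) (A : lmodType k) (mulA : A -> A -> A)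
  (A2 : tensor_product A A) (A3 : tensor_product A A2).
Hypothesis Hbil : bilin mulA.
Hypothesis Hassoc : forall a b c, mulA (mulA a b) c = mulA a (mulA b c).
Hypothesis Hndl : forall a, (forall b, mulA a b = 0) -> a = 0.
Hypothesis Hndr : forall a, (forall b, mulA b a = 0) -> a = 0.
Variables (DL DR DLc DRc : A -> A2 -> A2) (eps epsc : A -> k)
  (T1 T2 T1inv T2inv T1c T2c T1cinv T2cinv : A2 -> A2).
Hypothesis HD : is_GMHC mulA A3 DL DR eps T1 T2 T1inv T2inv.
Hypothesis HDc : is_GMHC mulA A3 DLc DRc epsc T1c T2c T1cinv T2cinv.
Hypothesis hL : forall a y, DLc a y = flip2 (DL a (flip2 y)).
Hypothesis ntriv : exists b : A, b != 0.

Local Notation t2 := (tp A2).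
Local Notation t3 := (tp A3).
Local Notation m := mulA.
Local Notation mul2 := (mul2 mulA (A2:=A2)).
Local Notation lmulL := (lmulL mulA (A2:=A2)).
Local Notation rmulL := (rmulL mulA (A2:=A2)).
Local Notation lmulR := (lmulR mulA (A2:=A2)).
Local Notation rmulR := (rmulR mulA (A2:=A2)).
Local Notation flip := (flip2 (A2:=A2)).
Local Notation m2 := (m2 mulA (A2:=A2)).

Let HM : forall a x y, mul2 x (DL a y) = mul2 (DR a x) y.
Proof. by case: HD. Qed.
Let HDLm : forall a b y, DL (m a b) y = DL a (DL b y).
Proof. by case: HD => _ [_ [_ [H _]]]. Qed.
Let HT1l : lin T1.
Proof. by case: HD => _ [_ [_ [_ [_ [H _]]]]]. Qed.
Let HT1a : forall a b x, mul2 (T1 (t2 a b)) x = DL a (lmulR b x).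
Proof. by case: HD => _ [_ [_ [_ [_ [_ [H _]]]]]] a b x; case: (H a b x). Qed.
Let HT2l : lin T2.
Proof. by case: HD => _ [_ [_ [_ [_ [_ [_ [H _]]]]]]]. Qed.
Let HT2a : forall a b x, mul2 (T2 (t2 a b)) x = lmulL a (DL b x).
Proof. by case: HD => _ [_ [_ [_ [_ [_ [_ [_ [H _]]]]]]]] a b x; case: (H a b x). Qed.
Let Hel : linf eps.
Proof. by case: HD => _ [_ [_ [_ [_ [_ [_ [_ [_ [H _]]]]]]]]]. Qed.
Let HeT1 : forall a b, eps_id eps (T1 (t2 a b)) = m a b.
Proof. by case: HD => _ [_ [_ [_ [_ [_ [_ [_ [_ [_ [H _]]]]]]]]]]. Qed.
Let HeT2 : forall a b, id_eps eps (T2 (t2 a b)) = m a b.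
Proof. by case: HD => _ [_ [_ [_ [_ [_ [_ [_ [_ [_ [_ [H _]]]]]]]]]]]. Qed.
Let c1 : cancel T1 T1inv.
Proof. by case: HD => _ [_ [_ [_ [_ [_ [_ [_ [_ [_ [_ [_ [H _]]]]]]]]]]]]. Qed.
Let c2 : cancel T1inv T1.
Proof. by case: HD => _ [_ [_ [_ [_ [_ [_ [_ [_ [_ [_ [_ [_ [H _]]]]]]]]]]]]]. Qed.
Let c3 : cancel T2 T2inv.
Proof. by case: HD => _ [_ [_ [_ [_ [_ [_ [_ [_ [_ [_ [_ [_ [_ [H _]]]]]]]]]]]]]]. Qed.
Let c4 : cancel T2inv T2.
Proof. by case: HD => _ [_ [_ [_ [_ [_ [_ [_ [_ [_ [_ [_ [_ [_ [_ [H _]]]]]]]]]]]]]]]. Qed.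
Let coq1 : forall a b c, lmulL c (T1inv (t2 a b)) =
   id_eps_id eps (id_tens T1inv (tens_r A3 (T2 (t2 c a)) b)).
Proof. by case: HD => _ [_ [_ [_ [_ [_ [_ [_ [_ [_ [_ [_ [_ [_ [_ [_ [H _]]]]]]]]]]]]]]]]. Qed.

Let HT1cl : lin T1c.
Proof. by case: HDc => _ [_ [_ [_ [_ [H _]]]]]. Qed.
Let HT1ca : forall a b x, mul2 (T1c (t2 a b)) x = DLc a (lmulR b x).
Proof. by case: HDc => _ [_ [_ [_ [_ [_ [H _]]]]]] a b x; case: (H a b x). Qed.
Let Hecl : linf epsc.
Proof. by case: HDc => _ [_ [_ [_ [_ [_ [_ [_ [_ [H _]]]]]]]]]. Qed.
Let HeT1c : forall a b, eps_id epsc (T1c (t2 a b)) = m a b.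
Proof. by case: HDc => _ [_ [_ [_ [_ [_ [_ [_ [_ [_ [H _]]]]]]]]]]. Qed.
Let cc1 : cancel T1c T1cinv.
Proof. by case: HDc => _ [_ [_ [_ [_ [_ [_ [_ [_ [_ [_ [_ [H _]]]]]]]]]]]]. Qed.
Let cc2 : cancel T1cinv T1c.
Proof. by case: HDc => _ [_ [_ [_ [_ [_ [_ [_ [_ [_ [_ [_ [_ [H _]]]]]]]]]]]]]. Qed.

Let T1invl : lin T1inv. Proof. exact: lin_inv HT1l c1 c2. Qed.
Let T2invl : lin T2inv. Proof. exact: lin_inv HT2l c3 c4. Qed.
Let T1cinvl : lin T1cinv. Proof. exact: lin_inv HT1cl cc1 cc2. Qed.

Lemma DL_lin a : lin (DL a).
Proof.
move=> al y y'; apply: (ND2l_eq Hbil Hndr) => w.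
by rewrite HM !mul2Pr // !HM.
Qed.

Lemma DL_mul2 u z x : mul2 (DL u z) x = DL u (mul2 z x).
Proof.
apply: (ND2l_eq Hbil Hndr) => w.
by rewrite -mul2A // HM mul2A // HM.
Qed.


Ltac lin_tac := let a := fresh "a" in let x := fresh "x" in let y := fresh "y" in
  move=> a x y; rewrite ?(mul2Pl, mul2Pr, lmulLP, rmulLP, lmulRP, rmulRP, flipP,
     m2P, eps_idP, id_epsP, mulAPl, mulAPr) //.

Lemma ClaimB u Y : T1 (lmulL u Y) = DL u (T1 Y).
Proof.
move: Y; apply: tp_ext.
- by move=> a x y; rewrite lmulLP // (linP HT1l).
- by move=> a x y; rewrite (linP HT1l) (linP (DL_lin u)).
move=> y z; rewrite lmulL_tp //; apply: (ND2r_eq Hbil Hndl) => x.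
by rewrite HT1a HDLm DL_mul2 HT1a.
Qed.

Definition Phi y (Z : A2) : A2 := tlift A2 (fun u w => lmulL u (T1inv (t2 y w))) Z.

Lemma Phi_bil y : bilin (fun u w => lmulL u (T1inv (t2 y w))).
Proof.
apply: bilinI => [v a x x'|u a x x']; first by rewrite lmulL_linc.
by rewrite tpPr (linP T1invl) lmulLP.
Qed.

Lemma Phi_tp y u w : Phi y (t2 u w) = lmulL u (T1inv (t2 y w)).
Proof. exact: (tlift_tp A2 (Phi_bil y)). Qed.
Lemma PhiP y a x x' : Phi y (a *: x + x') = a *: Phi y x + Phi y x'.
Proof. exact: (tlift_lin (Phi_bil y)). Qed.

Lemma ClaimC y Z : T1 (Phi y Z) = rmulL (T1 Z) y.
Proof.
move: Z; apply: tp_ext.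
- by move=> a x x'; rewrite PhiP (linP HT1l).
- by move=> a x x'; rewrite (linP HT1l) rmulLP.
move=> u w; rewrite Phi_tp ClaimB c2; apply: (ND2r_eq Hbil Hndl) => x.
by rewrite DL_mul2 mul2_rmulL // HT1a mul2_tpl'.
Qed.

Lemma Phi_inv x b y : Phi y (T1inv (t2 x b)) = T1inv (t2 (m x y) b).
Proof. by rewrite -(c1 (Phi _ _)) ClaimC c2 rmulL_tp. Qed.

Lemma eT1m Y : eps_id eps (T1 Y) = m2 Y.
Proof.
move: Y; apply: tp_ext.
- by move=> a x y; rewrite (linP HT1l) eps_idP.
- by move=> a x y; rewrite m2P.
by move=> u v; rewrite HeT1 m2_tp.
Qed.

Lemma m2T1inv W : m2 (T1inv W) = eps_id eps W.
Proof. by rewrite -eT1m c2. Qed.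

Lemma m2Phi y Z : m2 (Phi y Z) = eps y *: m2 Z.
Proof.
move: Z; apply: tp_ext.
- by move=> a x x'; rewrite PhiP m2P.
- by move=> a x x'; rewrite m2P // scalerDr !scalerA mulrC.
move=> u w; rewrite Phi_tp m2_lmulL // m2T1inv eps_id_tp // m2_tp //.
by rewrite mulAZr.
Qed.

Lemma emul x y : eps (m x y) = eps x * eps y.
Proof.
have [b nb] := ntriv.
have E : eps (m x y) *: b = eps y *: (eps x *: b).
  by rewrite -(eps_id_tp A2 Hel (m x y) b) -m2T1inv -Phi_inv m2Phi m2T1inv eps_id_tp.
have : (eps (m x y) - eps y * eps x) *: b = 0.
  by rewrite scalerBl -scalerA E subrr.
by move/eqP; rewrite scaler_eq0 (negbTE nb) orbF subr_eq0 mulrC => /eqP.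
Qed.


Definition Psi (W : A2) : A := eps_id eps (T1inv W).
Lemma PsiP a x y : Psi (a *: x + y) = a *: Psi x + Psi y.
Proof. by rewrite /Psi (linP T1invl) eps_idP. Qed.
Lemma Psi_lin : lin Psi. Proof. exact: PsiP. Qed.

Lemma PsiPhi y Z : eps_id eps (Phi y Z) = Psi (t2 y (eps_id eps Z)).
Proof.
move: Z; apply: tp_ext.
- by move=> a x x'; rewrite PhiP eps_idP.
- by move=> a x x'; rewrite eps_idP // tpPr PsiP.
move=> u w; rewrite Phi_tp (eps_id_lmulL Hbil Hel emul) eps_id_tp //.
by rewrite tpZr (linZ Psi_lin).
Qed.

Lemma Psi_mul x y b : Psi (t2 (m x y) b) = Psi (t2 y (Psi (t2 x b))).
Proof. by rewrite {1}/Psi -Phi_inv PsiPhi. Qed.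

Lemma ClaimD q a b : rmulR (flip (T1c (t2 q a))) b = DL q (t2 a b).
Proof.
apply: (ND2r_eq Hbil Hndl) => x.
rewrite mul2_rmulR // mul2_flip // HT1ca hL flipK // flip_lmulR_flip //.
by rewrite DL_mul2 mul2_tpl.
Qed.

Lemma ClaimE Y b : T1 (rmulR Y b) = rmulR (T1 Y) b.
Proof.
move: Y; apply: tp_ext.
- by move=> a x y; rewrite rmulRP // (linP HT1l).
- by move=> a x y; rewrite (linP HT1l) rmulRP.
move=> y z; rewrite rmulR_tp //; apply: (ND2r_eq Hbil Hndl) => x.
by rewrite HT1a mul2_rmulR // HT1a lmulR_lmulR.
Qed.

Lemma T1inv_rmulR W b : T1inv (rmulR W b) = rmulR (T1inv W) b.
Proof. by rewrite -{1}(c2 W) -ClaimE c1. Qed.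

Lemma Psi_rmulR W b : Psi (rmulR W b) = m (Psi W) b.
Proof. by rewrite /Psi T1inv_rmulR eps_id_rmulR. Qed.

Lemma Psi_key q a b : m (Psi (flip (T1c (t2 q a)))) b = eps q *: Psi (t2 a b).
Proof.
rewrite -Psi_rmulR ClaimD -{1}(c2 (t2 a b)) -ClaimB /Psi c1.
by rewrite (eps_id_lmulL Hbil Hel emul).
Qed.

Lemma q0_ex : exists q0, eps q0 = 1.
Proof.
have [b nb] := ntriv.
have [q nq] : exists q, eps q != 0.
  apply: contrapT => H.
  have H0 : forall q, eps q = 0 by move=> q; apply: contrapT => nq; apply: H; exists q; apply/eqP.
  apply: (negP nb); apply/eqP; apply: Hndr => a.
  rewrite -HeT1; move: (T1 _); apply: tp_ext.
  - by move=> al x y; rewrite eps_idP.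
  - exact: lin_cst0.
  by move=> u v; rewrite eps_id_tp // H0 scale0r.
exists ((eps q)^-1 *: q); rewrite linfZ //.
by rewrite mulVf.
Qed.


Lemma S_exists : exists S : A -> A, forall a b, m (S a) b = Psi (t2 a b).
Proof.
have [q0 e1] := q0_ex.
by exists (fun a => Psi (flip (T1c (t2 q0 a)))) => a b; rewrite Psi_key e1 scale1r.
Qed.

Lemma ClaimA c a b : lmulR c (T1c (t2 a b)) = flip (rmulL (T2 (t2 c a)) b).
Proof.
apply: (ND2r_eq Hbil Hndl) => x.
rewrite mul2_lmulR // HT1ca hL lmulR_flip // mul2_flip // mul2_rmulL // HT2a.
by rewrite flip_lmulR.
Qed.

Lemma eT1c a b : eps_id eps (T1c (t2 a b)) = m a b.
Proof.
apply: (ndr_eq Hbil Hndr) => c.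
rewrite -(eps_id_lmulR Hbil Hel) ClaimA (eps_id_flip Hel) (id_eps_rmulL Hbil Hel).
by rewrite HeT2 Hassoc.
Qed.

Lemma eps_id_eq (W : A2) : eps_id epsc W = eps_id eps W.
Proof.
rewrite -(cc2 W); move: (T1cinv W); apply: tp_ext.
- by move=> a x y; rewrite (linP HT1cl) eps_idP.
- by move=> a x y; rewrite (linP HT1cl) eps_idP.
by move=> u v; rewrite HeT1c eT1c.
Qed.

Lemma eps_eq : epsc =1 eps.
Proof.
move=> a; have [b nb] := ntriv; have := eps_id_eq (t2 a b).
rewrite !eps_id_tp // => /eqP; rewrite -subr_eq0 -scalerBl scaler_eq0 (negbTE nb) orbF.
by rewrite subr_eq0 => /eqP.
Qed.

Section WithS.
Variable S : A -> A.
Hypothesis HS : forall a b, m (S a) b = Psi (t2 a b).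

Lemma S_lin : lin S.
Proof. by move=> al x y; apply: (ndl_eq Hbil Hndl) => b; rewrite HS mulAPl // !HS tpPl PsiP. Qed.

Lemma S_anti x y : S (m x y) = m (S y) (S x).
Proof. by apply: (ndl_eq Hbil Hndl) => b; rewrite HS Psi_mul Hassoc !HS. Qed.

Lemma S2 c y : m c (S y) = id_eps eps (T2inv (t2 c y)).
Proof.
have key : forall d Y, tlift A2 (fun u v => m u (eps_id eps (T1inv (t2 v d)))) (T2 Y)
    = m (id_eps eps Y) d.
  move=> d; apply: tp_ext.
  - move=> a x1 x2; rewrite (linP HT2l).
    by rewrite (linP (tlift_lin (coq_bil Hbil Hel T1invl d))).
  - by move=> a x1 x2; rewrite id_epsP // mulAPl.
  move=> al be; rewrite -(coq_m2 A3 Hbil Hel T1invl) -coq1 m2_lmulL // m2T1inv.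
  by rewrite eps_id_tp // id_eps_tp // (mulAZr Hbil) (mulAZl Hbil).
apply: (ndl_eq Hbil Hndl) => d.
rewrite Hassoc HS -key c4 /Psi.
by rewrite (tlift_tp A2 (coq_bil Hbil Hel T1invl d)).
Qed.

Variable S' : A -> A.
Hypothesis HS' : forall a b, m (S' a) b = eps_id epsc (T1cinv (t2 a b)).

Definition Psi' (W : A2) : A := eps_id epsc (T1cinv W).
Lemma Psi'P a x y : Psi' (a *: x + y) = a *: Psi' x + Psi' y.
Proof. by rewrite /Psi' (linP T1cinvl) eps_idP. Qed.

Lemma M2_bil : bilin (fun u v => S (Psi' (t2 v u))).
Proof.
apply: bilinI => ? ? ? ?.
  by rewrite tpPr Psi'P (linP S_lin).
by rewrite tpPl Psi'P (linP S_lin).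
Qed.

Definition M2map (W : A2) : A := tlift A2 (fun u v => S (Psi' (t2 v u))) W.
Lemma M2P a x y : M2map (a *: x + y) = a *: M2map x + M2map y.
Proof. exact: (tlift_lin M2_bil). Qed.

Lemma E0 Y : M2map (flip Y) = S (Psi' Y).
Proof.
move: Y; apply: tp_ext.
- by move=> a x y; rewrite flipP M2P.
- by move=> a x y; rewrite Psi'P (linP S_lin).
by move=> u v; rewrite flip_tp /M2map (tlift_tp A2 M2_bil).
Qed.

Lemma final v : S (S' v) = v.
Proof.
have E1 : forall Y, M2map (flip (T1c Y)) = Psi (flip (T1c Y)).
  apply: tp_ext.
  - by move=> a x y; rewrite (linP HT1cl) flipP M2P.
  - by move=> a x y; rewrite (linP HT1cl) flipP PsiP.
  move=> x b; rewrite E0 /Psi' cc1 eps_id_tp // (linZ S_lin) eps_eq.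
  apply: (ndl_eq Hbil Hndl) => c.
  by rewrite Psi_key (mulAZl Hbil) HS.
have E3 : forall W, M2map W = Psi W.
  by move=> W; rewrite -(flipK W) -(cc2 (flip W)) E1.
have E4 : forall u, m (S u) (S (S' v)) = m (S u) v.
  move=> u; rewrite -S_anti HS -E3 /M2map (tlift_tp A2 M2_bil).
  by rewrite /Psi' -HS'.
have E5 : forall W, m (id_eps eps (T2inv W)) (S (S' v)) = m (id_eps eps (T2inv W)) v.
  apply: tp_ext.
  - by move=> a x y; rewrite (linP T2invl) id_epsP // mulAPl.
  - by move=> a x y; rewrite (linP T2invl) id_epsP // mulAPl.
  by move=> c u; rewrite -S2 !Hassoc E4.
have [q0 e1] := q0_ex.
apply: (ndr_eq Hbil Hndr) => x.
have Ex : x = id_eps eps (T2inv (T2 (t2 x q0))) by rewrite c3 id_eps_tp // e1 scale1r.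
by rewrite Ex E5.
Qed.

End WithS.

End Alg.

Theorem proposition3p1 (k : fieldType) (A : lmodType k) (mulA : A -> A -> A)
  (A2 : tensor_product A A) (A3 : tensor_product A A2)
  (DL DR : A -> A2 -> A2) (eps epsc : A -> k)
  (T1 T2 T1inv T2inv T1c T2c T1cinv T2cinv : A2 -> A2) :
  nd_algebra mulA ->
  is_GMHC mulA A3 DL DR eps T1 T2 T1inv T2inv ->
  (* regularity: (A, Delta^cop) is again a GMHC, with counit epsc *)
  is_GMHC mulA A3 (fun a y => flip2 (DL a (flip2 y)))
                  (fun a y => flip2 (DR a (flip2 y))) epsc T1c T2c T1cinv T2cinv ->
  (* (1) eps^cop = eps *)
  epsc =1 eps /\
  (* (2) S(A) in A, S^cop(A) in A, and S^cop = S^-1 *)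
  exists S Scop : A -> A,
    (forall a b, mulA (S a) b = eps_id eps (T1inv (tp A2 a b))) /\
    (forall a b, mulA (Scop a) b = eps_id epsc (T1cinv (tp A2 a b))) /\
    cancel S Scop /\ cancel Scop S.
Proof.
move=> [Hbil [Hassoc [Hndl Hndr]]] HD HDc.
have [ntriv|triv] := pselect (exists b : A, b != 0); last first.
  have z : forall a : A, a = 0.
    by move=> a; case: (eqVneq a 0) => // na; exfalso; apply: triv; exists a.
  have Hel : linf eps by case: HD => _ [_ [_ [_ [_ [_ [_ [_ [_ [H _]]]]]]]]].
  have Hecl : linf epsc by case: HDc => _ [_ [_ [_ [_ [_ [_ [_ [_ [H _]]]]]]]]].
  split; first by move=> a; rewrite (z a) (linf0 Hel) (linf0 Hecl).
  by exists id, id; split; [|split; [|split]] => // *; rewrite [LHS]z [RHS]z.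
have hL : forall a y, (fun a y => flip2 (DL a (flip2 y))) a y = flip2 (DL a (flip2 y)) by [].
have hL' : forall a y, DL a y = flip2 ((fun a y => flip2 (DL a (flip2 y))) a (flip2 y)).
  by move=> a y; rewrite /= !flipK.
split; first exact: (eps_eq Hbil Hassoc Hndl Hndr HD HDc hL ntriv).
have [S HS] := S_exists Hbil Hassoc Hndl Hndr HD HDc hL ntriv.
have [Sc HSc] := S_exists Hbil Hassoc Hndl Hndr HDc HD hL' ntriv.
exists S, Sc; split; first exact: HS.
split; first exact: HSc.
split.
  by move=> v; apply: (final Hbil Hassoc Hndl Hndr HDc HD hL' ntriv HSc HS).
by move=> v; apply: (final Hbil Hassoc Hndl Hndr HD HDc hL ntriv HS HSc).
Qed.
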